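(* Suppose that $\Sigma=(X,U,F)$ is a system, $Q\subset X$ is controlled invariant, and $(\mathcal{A},G)$ is a quasi-invariant-partition of $Q$. Then \[h_{inv}(\mathcal{A},G)=\lim_{m\to\infty}\frac1m\max_{\alpha\in W_m(\mathcal{A},G)}\sum_{i=0}^{m-2}w(\alpha(i)).\]
   Context: A system is a triple $\Sigma=(X,U,F)$ where $X,U$ are nonempty sets and $F:X\times U\rightrightarrows X$ is a set-valued map with $F(x,u)\neq\emptyset$ for all $(x,u)$; for $A\subset X$, $F(A,u)=\bigcup_{x\in A}F(x,u)$. $Q\subset X$ is controlled invariant if for every $x\in Q$ there is $u\in U$ with $F(x,u)\subset Q$. An invariant cover of $Q$ is a pair $(\mathcal{A},G)$ where $\mathcal{A}$ is a finite cover of $Q$ (by subsets of $Q$) and $G:\mathcal{A}\to U$ satisfies $F(A,G(A))\subset Q$ for all $A\in\mathcal{A}$. For $\mathcal{S}\subset\mathcal{A}^n$, $\alpha=\alpha(0)\cdots\alpha(n-1)\in\mathcal{S}$ and integer $0\le t<n-1$, let $P(\alpha|_{[0,t]})=\{A\in\mathcal{A}:\exists\hat\alpha\in\mathcal{S},\ \hat\alpha|_{[0,t]}=\alpha|_{[0,t]},\ A=\hat\alpha(t+1)\}$, and $P(\alpha|_{[0,n-1]})=P(\alpha)=\{\hat\alpha(0):\hat\alpha\in\mathcal{S}\}$. $\mathcal{S}$ is $(n,Q)$-spanning in $(\mathcal{A},G)$ if (1) the elements of $P(\alpha)$ cover $Q$, and (2) for every $\alpha\in\mathcal{S}$ and $0\le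 t<n-1$, $F(\alpha(t),G(\alpha(t)))\subset\bigcup_{A'\in P(\alpha|_{[0,t]})}A'$. Let $N(\mathcal{S})=\max_{\alpha\in\mathcal{S}}\prod_{t=0}^{n-1}\sharp P(\alpha|_{[0,t]})$, $r_{inv}(n,Q,\mathcal{A},G)=\min\{N(\mathcal{S}):\mathcal{S}\ (n,Q)\text{-spanning in }(\mathcal{A},G)\}$, and $h_{inv}(\mathcal{A},G)=\lim_{n\to\infty}\frac1n\log r_{inv}(n,Q,\mathcal{A},G)$ ($\log$ base $2$). For $A\in\mathcal{A}$: $D(A)=\{A'\in\mathcal{A}:F(A,G(A))\cap A'\neq\emptyset\}$ and $w(A)=\log\sharp D(A)$. $W_m(\mathcal{A},G)$ is the set of sequences $(A_i)_{i=0}^{m-1}$ in $\mathcal{A}$ with $F(A_i,G(A_i))\cap A_{i+1}\neq\emptyset$ for all $0\le i<m-1$. An invariant cover $(\mathcal{A},G)$ is a quasi-invariant-partition of $Q$ if $A\setminus\bigcup_{B\in\mathcal{A},B\neq A}B\neq\emptyset$ for all $A\in\mathcal{A}$, and $F(A,G(A))\cap\big(B\setminus\bigcup_{C\in D(A),C\neq B}C\big)\neq\emptyset$ for all $A\in\mathcal{A}$ and $B\in D(A)$. *)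

(* Defs.v *)
From Stdlib Require Import Reals.
From mathcomp Require Import all_boot.
From mathcomp Require Import boolp.

Set Implicit Arguments.
Unset Strict Implicit.
Unset Printing Implicit Defensive.

Definition is_system (X U : Type) (F : X -> U -> X -> Prop) : Prop :=
  inhabited X /\ inhabited U /\ (forall x u, exists y, F x u y).

Definition controlled_invariant (X U : Type) (F : X -> U -> X -> Prop)
  (Q : X -> Prop) : Prop :=
  forall x, Q x -> exists u, forall y, F x u y -> Q y.

(* ---------- Covers ----------
   A finite cover \mathcal{A} is represented as an injective family
   cov : I -> (X -> Prop) indexed by a finite type I (injectivity makes the
   family a genuine finite set of subsets); G : I -> U. *)

Definition invariant_cover (X U : Type) (F : X -> U -> X -> Prop)
  (Q : X -> Prop) (I : finType) (cov : I -> X -> Prop) (G : I -> U) : Prop :=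
  injective cov /\
  (forall i x, cov i x -> Q x) /\
  (forall x, Q x -> exists i, cov i x) /\
  (forall i x y, cov i x -> F x (G i) y -> Q y).

Section Cover.
Variables (X U : Type) (F : X -> U -> X -> Prop) (Q : X -> Prop)
  (I : finType) (cov : I -> X -> Prop) (G : I -> U).

Definition Dset (i : I) : {set I} :=
  [set j | `[< exists x y, cov i x /\ F x (G i) y /\ cov j y >] ].

(* log base 2 (Stdlib ln is 0 on nonpositive arguments) *)
Definition log2 (r : R) : R := Rdiv (ln r) (ln 2).

Definition wgt (i : I) : R := log2 (INR #|Dset i|).

Definition quasi_invariant_partition : Prop :=
  invariant_cover F Q cov G /\
  (forall i, exists x, cov i x /\ forall j, j <> i -> ~ cov j x) /\
  (forall i j, j \in Dset i ->
     exists x y, cov i x /\ F x (G i) y /\ cov j y /\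
       forall k, k \in Dset i -> k <> j -> ~ cov k y).

(* ---------- (n,Q)-spanning sets ----------
   Elements alpha of \mathcal{A}^n are n-tuples of indices; alpha(t) is
   onth alpha t, and alpha|_[0,t] is take t.+1 alpha. *)

Definition Pfirst (n : nat) (S : {set n.-tuple I}) : {set I} :=
  [set A | [exists b in S, onth b 0 == Some A]].

(* P(alpha|_[0,t]) for 0 <= t < n-1, and P(alpha) for t >= n-1 *)
Definition Pset (n : nat) (S : {set n.-tuple I}) (a : n.-tuple I) (t : nat)
  : {set I} :=
  if t < n.-1 then
    [set A | [exists b in S,
               (take t.+1 b == take t.+1 a) && (onth b t.+1 == Some A)]]
  else Pfirst S.

Definition spanning (n : nat) (S : {set n.-tuple I}) : Prop :=
  (forall x, Q x -> exists A, A \in Pfirst S /\ cov A x) /\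
  (forall a, a \in S -> forall t A, t < n.-1 -> onth a t = Some A ->
     forall x y, cov A x -> F x (G A) y ->
       exists A', A' \in Pset S a t /\ cov A' y).

Definition Nspan (n : nat) (S : {set n.-tuple I}) : nat :=
  \max_(a in S) \prod_(t < n) #|Pset S a t|.

(* r_inv(n,Q,A,G) = min{ N(S) : S (n,Q)-spanning }.  The seed N(setT) of the
   fold is itself a value N(S) of a spanning S (setT is spanning for n >= 1),
   so this is the genuine minimum. *)
Definition r_inv (n : nat) : nat :=
  \big[minn/Nspan [set: n.-tuple I]]_(S : {set n.-tuple I} | `[< spanning S >])
     Nspan S.

Definition hinv_seq (n : nat) : R := Rdiv (log2 (INR (r_inv n))) (INR n).

Definition trans_rel (i j : I) : Prop :=
  exists x y, cov i x /\ F x (G i) y /\ cov j y.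

Definition inW (m : nat) (a : m.-tuple I) : bool :=
  sorted (fun i j => `[< trans_rel i j >]) a.

Definition path_weight (m : nat) (a : m.-tuple I) : R :=
  \big[Rplus/R0]_(A <- take m.-1 a) wgt A.

Definition wpath_seq (m : nat) : R :=
  Rdiv (\big[Rmax/R0]_(a : m.-tuple I | inW a) path_weight a) (INR m).

End Cover.

(* Main.v *)
From Stdlib Require Import Reals Lra Lia Classical.

Section Fek.
Local Open Scope R_scope.
Lemma fekete_iter (d : nat -> R) :
  (forall n, 0 <= d n) -> (forall m k, d (m + k)%nat <= d m + d k) ->
  forall k q r, d (q * k + r)%nat <= INR q * d k + d r.
Proof.
intros Hpos Hsub k q r; induction q as [|q IH].
- simpl; lra.
- replace (S q * k + r)%nat with (k + (q * k + r))%nat by lia.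
  rewrite S_INR. specialize (Hsub k (q * k + r)%nat). lra.
Qed.

Lemma fekete_lin (d : nat -> R) :
  (forall n, 0 <= d n) -> (forall m k, d (m + k)%nat <= d m + d k) ->
  forall r, d r <= d 0%nat + INR r * d 1%nat.
Proof.
intros Hpos Hsub r; induction r as [|r IH].
- simpl. lra.
- replace (S r) with (r + 1)%nat by lia. rewrite plus_INR.
  specialize (Hsub r 1%nat). simpl. lra.
Qed.

Lemma fekete (d : nat -> R) :
  (forall n, 0 <= d n) -> (forall m k, d (m + k)%nat <= d m + d k) ->
  exists L, Un_cv (fun n => d n / INR n) L.
Proof.
intros Hpos Hsub.
set (E := fun x => exists n, x = - (d (S n) / INR (S n))).
assert (HB : bound E).
{ exists 0. intros x [n ->].
  assert (0 <= d (S n) / INR (S n)).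
  { apply Rle_mult_inv_pos; [apply Hpos | apply lt_0_INR; lia]. }
  lra. }
assert (HE : exists x, E x) by (exists (- (d 1%nat / INR 1)); exists 0%nat; reflexivity).
destruct (completeness E HB HE) as [l [Hub Hlub]].
exists (- l). intros eps Heps.
assert (Hk : exists k, (0 < k)%nat /\ d k / INR k < - l + eps / 2).
{ apply NNPP; intro Hn.
  assert (Hb : is_upper_bound E (l - eps / 2)).
  { intros x [n ->].
    destruct (Rlt_or_le (d (S n) / INR (S n)) (- l + eps / 2)) as [Hlt|Hge].
    - exfalso; apply Hn; exists (S n); split; [lia|exact Hlt].
    - lra. }
  specialize (Hlub _ Hb). lra. }
destruct Hk as [k [Hk0 Hk]].
set (u := d k / INR k).
assert (Hkpos : 0 < INR k) by (apply lt_0_INR; lia).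
assert (Hu : d k = u * INR k) by (unfold u; field; lra).
assert (Hu0 : 0 <= u) by (unfold u; apply Rle_mult_inv_pos; [apply Hpos|lra]).
set (B := d 0%nat + INR k * d 1%nat).
assert (HB0 : 0 <= B) by (unfold B; generalize (Hpos 0%nat); generalize (Rmult_le_pos _ _ (pos_INR k) (Hpos 1%nat)); lra).
destruct (archimed_cor1 (eps / (2 * (B + 1)))) as [N [HN HN0]].
{ apply Rdiv_lt_0_compat; lra. }
exists N. intros n Hn.
assert (HnN : INR N <= INR n) by (apply le_INR; lia).
assert (HN0' : 0 < INR N) by (apply lt_0_INR; lia).
assert (Hn0 : 0 < INR n) by lra.
assert (Hlow : - l <= d n / INR n).
{ destruct n as [|n']; [lia|].
  assert (E (- (d (S n') / INR (S n')))) by (exists n'; reflexivity).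
  specialize (Hub _ H). lra. }
assert (Hdiv : n = (k * (n / k) + n mod k)%nat) by (apply Nat.div_mod_eq).
set (q := (n / k)%nat) in *. set (r := (n mod k)%nat) in *.
assert (Hr : (r < k)%nat) by (apply Nat.mod_upper_bound; lia).
assert (Hdn : d n <= INR q * d k + d r).
{ rewrite Hdiv. replace (k * q + r)%nat with (q * k + r)%nat by lia.
  apply fekete_iter; assumption. }
assert (Hdr : d r <= B).
{ unfold B. apply Rle_trans with (d 0%nat + INR r * d 1%nat); [apply fekete_lin; assumption|].
  apply Rplus_le_compat_l. apply Rmult_le_compat_r; [apply Hpos|]. apply le_INR; lia. }
assert (Hqk : INR q * INR k <= INR n).
{ rewrite <- mult_INR. apply le_INR. lia. }
assert (HBn : B < INR n * (eps / 2)).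
{ assert (H1 : B * / INR N < eps / 2).
  { apply Rle_lt_trans with ((B + 1) * / INR N).
    - apply Rmult_le_compat_r; [left; apply Rinv_0_lt_compat; lra | lra].
    - apply Rmult_lt_reg_l with (/ (B + 1)). { apply Rinv_0_lt_compat; lra. }
      replace (/ (B + 1) * ((B + 1) * / INR N)) with (/ INR N) by (field; lra).
      replace (/ (B + 1) * (eps / 2)) with (eps / (2 * (B + 1))) by (field; lra).
      exact HN. }
  assert (H2 : B < INR N * (eps / 2)).
  { apply Rmult_lt_reg_r with (/ INR N). { apply Rinv_0_lt_compat; lra. }
    replace (INR N * (eps / 2) * / INR N) with (eps / 2) by (field; lra). lra. }
  assert (H3 : INR N * (eps / 2) <= INR n * (eps / 2)).
  { apply Rmult_le_compat_r; lra. }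
  lra. }
assert (Hup : d n < INR n * (- l + eps)).
{ assert (INR q * d k <= INR n * u).
  { rewrite Hu. replace (INR q * (u * INR k)) with (u * (INR q * INR k)) by ring.
    rewrite (Rmult_comm (INR n)). apply Rmult_le_compat_l; assumption. }
  assert (INR n * u < INR n * (- l + eps / 2)) by (apply Rmult_lt_compat_l; assumption).
  lra. }
assert (Hup' : d n / INR n < - l + eps).
{ apply Rmult_lt_reg_r with (INR n); [assumption|].
  replace (d n / INR n * INR n) with (d n) by (field; lra). lra. }
unfold Rdist. apply Rabs_def1; lra.
Qed.
End Fek.

Require Import Defs.
From Stdlib Require Import Reals.
From mathcomp Require Import all_boot.
From mathcomp Require Import boolp.
From mathcomp Require Import zify.

Set Implicit Arguments.
Unset Strict Implicit.
Unset Printing Implicit Defensive.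

Section Log.
Local Open Scope R_scope.

Lemma ln0 : ln 0 = 0.
Proof. unfold ln; destruct (Rlt_dec 0 0) as [h|h]; [exfalso; exact (Rlt_irrefl _ h)|reflexivity]. Qed.

Lemma ln2pos : 0 < ln 2.
Proof. rewrite <- ln_1; apply ln_increasing; lra. Qed.

Lemma ln_le' x y : 0 < x -> x <= y -> ln x <= ln y.
Proof.
intros Hx Hxy; destruct (Rle_lt_or_eq_dec _ _ Hxy) as [H|H].
- left; apply ln_increasing; assumption.
- rewrite H; lra.
Qed.

Lemma log2_nat_ge0 n : 0 <= log2 (INR n).
Proof.
unfold log2, Rdiv. apply Rle_mult_inv_pos; [|apply ln2pos].
destruct n as [|n]; [simpl; rewrite ln0; lra|].
rewrite <- ln_1; apply ln_le'; [lra|].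
rewrite S_INR; generalize (pos_INR n); lra.
Qed.

Lemma log2_nat_le (m n : nat) : (m <= n)%N -> log2 (INR m) <= log2 (INR n).
Proof.
move=> /leP Hmn.
destruct m as [|m]; [simpl; unfold log2; rewrite ln0; unfold Rdiv; rewrite Rmult_0_l; apply log2_nat_ge0|].
unfold log2, Rdiv; apply Rmult_le_compat_r; [left; apply Rinv_0_lt_compat, ln2pos|].
apply ln_le'; [apply lt_0_INR; lia|apply le_INR; lia].
Qed.

Lemma log2_nat_mul (m n : nat) : (0 < m)%N -> (0 < n)%N ->
  log2 (INR (m * n)) = log2 (INR m) + log2 (INR n).
Proof.
move=> /ltP Hm /ltP Hn.
rewrite -multE mult_INR; unfold log2; rewrite ln_mult; [field; generalize ln2pos; lra| |];
apply lt_0_INR; lia.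
Qed.

Lemma log2_nat_mul_le (m n : nat) :
  log2 (INR (m * n)) <= log2 (INR m) + log2 (INR n).
Proof.
case: m => [|m]; first by rewrite mul0n; generalize (log2_nat_ge0 0) (log2_nat_ge0 n); lra.
case: n => [|n]; first by rewrite muln0; generalize (log2_nat_ge0 0) (log2_nat_ge0 m.+1); lra.
rewrite log2_nat_mul //; lra.
Qed.

Lemma cv_close (u v : nat -> R) L c : 0 <= c -> Un_cv u L ->
  (forall n, (0 < n)%N -> Rabs (v n - u n) <= c / INR n) -> Un_cv v L.
Proof.
intros Hc Hu Hv eps Heps.
destruct (Hu (eps / 2)) as [N1 HN1]; [lra|].
destruct (archimed_cor1 (eps / (2 * (c + 1)))) as [N2 [HN2 HN20]].
{ apply Rdiv_lt_0_compat; lra. }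
exists (Nat.max N1 N2). intros n Hn.
assert (Hn1 : (n >= N1)%coq_nat) by lia.
assert (HnN : INR N2 <= INR n) by (apply le_INR; lia).
assert (HN2' : 0 < INR N2) by (apply lt_0_INR; lia).
assert (Hvn : Rabs (v n - u n) <= c / INR n) by (apply Hv; apply/ltP; lia).
assert (Hcn : c / INR n < eps / 2).
{ apply Rle_lt_trans with ((c + 1) * / INR N2).
  - unfold Rdiv. apply Rle_trans with ((c + 1) * / INR n).
    + apply Rmult_le_compat_r; [left; apply Rinv_0_lt_compat; lra|lra].
    + apply Rmult_le_compat_l; [lra|]. apply Rinv_le_contravar; lra.
  - apply Rmult_lt_reg_l with (/ (c + 1)). { apply Rinv_0_lt_compat; lra. }
    replace (/ (c + 1) * ((c + 1) * / INR N2)) with (/ INR N2) by (field; lra).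
    replace (/ (c + 1) * (eps / 2)) with (eps / (2 * (c + 1))) by (field; lra).
    exact HN2. }
specialize (HN1 n Hn1). unfold Rdist in *.
replace (v n - L) with ((v n - u n) + (u n - L)) by ring.
apply Rle_lt_trans with (Rabs (v n - u n) + Rabs (u n - L)); [apply Rabs_triang|].
lra.
Qed.

End Log.

Section Comb.
Variables (X U : Type) (F : X -> U -> X -> Prop) (Q : X -> Prop)
  (I : finType) (cov : I -> X -> Prop) (G : I -> U).
Hypothesis Hsys : is_system F.
Hypothesis Hqip : quasi_invariant_partition F Q cov G.

Local Notation D := (Dset F cov G).
Definition rtr : rel I := fun i j => `[< trans_rel F cov G i j >].

Lemma inD i j : (j \in D i) = rtr i j.
Proof. by rewrite in_set. Qed.

Lemma D_ne i : exists j, j \in D i.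
Proof.
case: Hqip => [[_ [Hsub [Hcov Hinv]]] [H2 _]].
have [x [cx _]] := H2 i.
case: Hsys => _ [_ HF]. have [y Fy] := HF x (G i).
have [j cj] := Hcov y (Hinv _ _ _ cx Fy).
by exists j; rewrite inD; apply/asboolP; exists x, y.
Qed.

Lemma D_pos i : 0 < #|D i|.
Proof. by have [j Hj] := D_ne i; apply/card_gt0P; exists j. Qed.

Definition succ (i : I) : I := odflt i [pick j in D i].

Lemma succP i : rtr i (succ i).
Proof.
rewrite -inD /succ; case: pickP => [j /= ->//|/= H].
by have [j Hj] := D_ne i; move: (H j); rewrite Hj.
Qed.

Lemma path_traj x k : path rtr x (traject succ (succ x) k).
Proof.
elim: k x => [//|k IH] x; rewrite trajectS /=.
by rewrite succP IH.
Qed.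

Definition pw (n : nat) (s : seq I) : nat := \prod_(A <- take n.-1 s) #|D A|.

Definition M (n : nat) : nat := \max_(a : n.-tuple I | inW F cov G a) pw n a.

Lemma inWE n (a : n.-tuple I) : inW F cov G a = sorted rtr a.
Proof. by []. Qed.

Lemma le_M n (s : seq I) : size s = n -> sorted rtr s -> pw n s <= M n.
Proof.
move=> Hs Hsort.
have Hs' : size s == n by apply/eqP.
pose t : n.-tuple I := Tuple Hs'.
have -> : pw n s = pw n t by [].
by apply: leq_bigmax_cond.
Qed.


Lemma onth_nthS (x0 : I) (s : seq I) t : t < size s -> onth s t = Some (nth x0 s t).
Proof. by elim: s t => [//|y s IH] [|t] //= Ht; apply: IH. Qed.

Lemma D_sub_P n (S : {set n.-tuple I}) (x0 : I) :
  spanning F Q cov G S -> forall (a : n.-tuple I) t,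
  a \in S -> t < n.-1 -> D (nth x0 a t) \subset Pset S a t.
Proof.
move=> Hsp a t Ha Ht; apply/subsetP => j Hj.
have Hta : t < size a by rewrite size_tuple; case: n a S Hsp Ha Ht {Hj} => //= n' *; apply: ltnW.
set A := nth x0 a t in Hj *.
have HA : onth a t = Some A by apply: onth_nthS.
case: Hqip => _ [_ H3].
have [x [y [cx [Fy [cy Hu]]]]] := H3 A j Hj.
have [A' [HA'P cA']] := Hsp.2 a Ha t A Ht HA x y cx Fy.
have HA'D : A' \in D A by rewrite inD; apply/asboolP; exists x, y.
case: (eqVneq A' j) => [<-//|Hne].
have Hne' : A' <> j by apply/eqP.
by case: (Hu A' HA'D Hne' cA').
Qed.

Lemma take1 (x0 : I) (s : seq I) : 0 < size s -> take 1 s = [:: nth x0 s 0].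
Proof. by case: s => [|y [|z s']]. Qed.

Lemma W_sub n (S : {set n.-tuple I}) :
  spanning F Q cov G S -> forall (a : n.-tuple I),
  0 < n -> sorted rtr a -> a \in S.
Proof.
move=> Hsp a Hn Hsort.
pose x0 : I := tnth a (Ordinal Hn).
have Hsa : size a = n by rewrite size_tuple.
have Hclaim : forall k, k < n -> exists b, b \in S /\ take k.+1 b = take k.+1 a.
  elim=> [|k IH] Hk.
  - case: Hqip => [[_ [Hsub _]] [H2 _]].
    have [x [cx Hu]] := H2 (nth x0 a 0).
    have [A [HAP cA]] := Hsp.1 x (Hsub _ _ cx).
    have EA : A = nth x0 a 0.
      case: (eqVneq A (nth x0 a 0)) => // Hne.
      have Hne' : A <> nth x0 a 0 by apply/eqP.
      by case: (Hu A Hne' cA).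
    move: HAP; rewrite /Pfirst in_set => /existsP [b /andP [Hb /eqP Hob]].
    exists b; split => //.
    rewrite (take1 x0) ?size_tuple // (take1 x0) ?Hsa //.
    by rewrite (@onth_nth _ x0 _ _ _ Hob) EA.
  - have [b [Hb Htb]] := IH (ltnW Hk).
    have Hk' : k < n.-1 by clear -Hk; case: n Hk.
    have Hab : nth x0 b k = nth x0 a k.
      by rewrite -(nth_take x0 (ltnSn k) b) Htb nth_take.
    have Hnext : nth x0 a k.+1 \in D (nth x0 b k).
      by rewrite Hab inD; apply: (sortedP x0 Hsort); rewrite Hsa.
    have := subsetP (D_sub_P x0 Hsp Hb Hk') _ Hnext.
    rewrite /Pset Hk' in_set => /existsP [b' /and3P [Hb' /eqP Ht' /eqP Ho']].
    exists b'; split => //.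
    rewrite (take_nth x0) ?size_tuple // (take_nth x0 (s := a)) ?Hsa //.
    by rewrite Ht' Htb (@onth_nth _ x0 _ _ _ Ho').
have [b [Hb Htb]] := Hclaim n.-1 ltac:(by rewrite ltn_predL).
have Eb : b = a.
  apply: val_inj => /=.
  by move: Htb; rewrite prednK // !take_oversize ?size_tuple.
by rewrite -Eb.
Qed.


Lemma pw_ord (x0 : I) n (s : seq I) : n.-1 <= size s ->
  pw n s = \prod_(i < n.-1) #|D (nth x0 s i)|.
Proof.
move=> Hs; rewrite /pw (big_nth x0) size_takel // big_mkord.
by apply: eq_bigr => i _; rewrite nth_take.
Qed.

Lemma prod_ge n (S : {set n.-tuple I}) :
  spanning F Q cov G S -> forall (a : n.-tuple I),
  0 < n -> a \in S -> pw n a <= \prod_(t < n) #|Pset S a t|.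
Proof.
move=> Hsp a Hn Ha.
pose x0 : I := tnth a (Ordinal Hn).
move: Hn x0 Ha Hsp; case: n S a => [//|n'] S a _ x0 Ha Hsp.
rewrite big_ord_recr /=.
have Hlast : 0 < #|Pset S a n'|.
  apply/card_gt0P; exists (nth x0 a 0).
  rewrite /Pset ltnn in_set; apply/existsP; exists a.
  by rewrite Ha (onth_nthS x0) ?eqxx // size_tuple.
apply: leq_trans (leq_pmulr _ Hlast).
rewrite (pw_ord x0) /= ?size_tuple //.
apply: leq_prod => i _; apply: subset_leq_card.
by apply: D_sub_P.
Qed.

Lemma Pset_mono n (S1 S2 : {set n.-tuple I}) (a : n.-tuple I) t :
  S1 \subset S2 -> Pset S1 a t \subset Pset S2 a t.
Proof.
move=> H12; rewrite /Pset /Pfirst; case: ifP => _; apply/subsetP => A;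
  rewrite !in_set => /existsP [b /andP [Hb H]]; apply/existsP; exists b;
  by rewrite (subsetP H12 _ Hb) H.
Qed.

Lemma Nspan_ge n (S0 S : {set n.-tuple I}) :
  spanning F Q cov G S0 -> S0 \subset S -> forall (a : n.-tuple I),
  0 < n -> sorted rtr a -> pw n a <= Nspan S.
Proof.
move=> Hsp H0 a Hn Hsort.
have Ha := W_sub Hsp Hn Hsort.
apply: leq_trans (leq_bigmax_cond _ (subsetP H0 _ Ha)).
apply: leq_trans (prod_ge Hsp Hn Ha) _.
by apply: leq_prod => i _; apply: subset_leq_card; apply: Pset_mono.
Qed.

Definition S0 n : {set n.-tuple I} := [set a : n.-tuple I | inW F cov G a].

Lemma last_take (x : I) s t : t <= size s -> last x (take t s) = nth x (x :: s) t.
Proof. elim: s x t => [|y s IH] x [|t] //= Ht; rewrite IH // (set_nth_default y) //. Qed.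

Lemma sorted_ext (x0 : I) (s rest : seq I) t A' :
  sorted rtr s -> t < size s -> rtr (nth x0 s t) A' -> path rtr A' rest ->
  sorted rtr (take t.+1 s ++ A' :: rest).
Proof.
case: s => [//|x1 s] /= Hs Ht Hr Hp.
rewrite cat_path (take_path _ Hs) /= last_take // Hp andbT.
by rewrite (set_nth_default x0) //.
Qed.

Lemma S0_spanning n : 0 < n -> spanning F Q cov G (S0 n).
Proof.
move=> Hn; case: Hqip => [[_ [Hsub [Hcov Hinv]]] _]; split.
- move=> x Qx; have [A cA] := Hcov x Qx; exists A; split => //.
  have Hs : size (A :: traject succ (succ A) n.-1) == n.
    by rewrite /= size_traject prednK.
  rewrite /Pfirst in_set; apply/existsP; exists (Tuple Hs).
  by rewrite in_set inWE /= path_traj eqxx.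
- move=> a Ha t A Ht HA x y cx Fy.
  have [A' cA'] := Hcov y (Hinv _ _ _ cx Fy).
  exists A'; split => //.
  have Hta : t.+1 < size a by rewrite size_tuple; move: Ht; lia.
  pose b := take t.+1 a ++ traject succ A' (n - t.+1).
  have Hs : size b == n.
    rewrite size_cat size_takel ?size_traject; last by apply: ltnW.
    by apply/eqP; move: Hta; rewrite size_tuple; lia.
  rewrite /Pset Ht in_set; apply/existsP; exists (Tuple Hs).
  have Ht1 : t < size a by apply: ltnW.
  apply/and3P; split.
  - rewrite in_set inWE /= /b.
    have -> : n - t.+1 = (n - t.+2).+1 by move: Hta; rewrite size_tuple; lia.
    rewrite trajectS; apply: (sorted_ext (x0:=A)) => //.
    + by rewrite in_set inWE in Ha.
    + rewrite (@onth_nth _ A _ _ _ HA).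
      by apply/asboolP; exists x, y.
    + exact: path_traj.
  - by rewrite /b take_size_cat ?size_takel.
    rewrite /b onth_cat size_takel // ltnn subnn.
    have -> : n - t.+1 = (n - t.+2).+1 by move: Hta; rewrite size_tuple; lia.
    by rewrite trajectS.
Qed.

Lemma P_sub_D n (a : n.-tuple I) t (x0 : I) :
  t < n.-1 -> Pset (S0 n) a t \subset D (nth x0 a t).
Proof.
move=> Ht; rewrite /Pset Ht; apply/subsetP => A.
rewrite in_set => /existsP [b /and3P [Hb /eqP Htb /eqP Hob]].
rewrite in_set inWE in Hb.
have Hsb : t.+1 < size b by rewrite size_tuple; move: Ht; clear; case: n.
have -> : nth x0 a t = nth x0 b t by rewrite -(nth_take x0 (ltnSn t) b) Htb nth_take.
rewrite inD -(@onth_nth _ x0 _ _ _ Hob).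
exact: (sortedP x0 Hb).
Qed.

Lemma Nspan_S0 n : 0 < n -> Nspan (S0 n) <= M n * #|I|.
Proof.
move=> Hn; apply/bigmax_leqP => a Ha.
pose x0 : I := tnth a (Ordinal Hn).
have Hs : sorted rtr a by rewrite in_set inWE in Ha.
apply: leq_trans (leq_mul (le_M (size_tuple a) Hs) (leqnn _)).
move: Hn x0 Ha Hs; case: n a => [//|n'] a _ x0 Ha Hs.
rewrite big_ord_recr /=; apply: leq_mul; last exact: max_card.
rewrite (pw_ord x0) /= ?size_tuple //.
apply: leq_prod => i _; apply: subset_leq_card.
by apply: P_sub_D.
Qed.

Lemma big_min_le (T : eqType) (r : seq T) (P : pred T) (f : T -> nat) x y :
  y \in r -> P y -> \big[minn/x]_(i <- r | P i) f i <= f y.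
Proof.
elim: r => [//|z r IH]; rewrite inE big_cons => /orP [/eqP <-|Hy] Py.
  by rewrite Py geq_minl.
case: ifP => _; last exact: IH.
by apply: leq_trans (geq_minr _ _) (IH Hy Py).
Qed.

Lemma r_inv_le n : 0 < n -> r_inv F Q cov G n <= M n * #|I|.
Proof.
move=> Hn; apply: leq_trans (Nspan_S0 Hn).
rewrite /r_inv; apply: big_min_le; first exact: mem_index_enum.
by apply/asboolP; apply: S0_spanning.
Qed.

Lemma r_inv_ge n : 0 < n -> M n <= r_inv F Q cov G n.
Proof.
move=> Hn; rewrite /r_inv; apply: (big_ind (fun v => M n <= v)).
- apply/bigmax_leqP => a Ha.
  apply: (Nspan_ge (S0_spanning Hn) (subsetT _) Hn); by rewrite inWE in Ha.
- by move=> u v Hu Hv; rewrite leq_min Hu Hv.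
- move=> S /asboolP HS; apply/bigmax_leqP => a Ha.
  apply: (Nspan_ge HS (subxx _) Hn); by rewrite inWE in Ha.
Qed.


Lemma M_subadd m k : 0 < m -> 0 < k -> M (m + k) <= M m * (#|I| * M k).
Proof.
case: m => [//|m']; case: k => [//|k'] _ _.
apply/bigmax_leqP => a Ha; rewrite inWE in Ha.
have Hsa : size a = m'.+1 + k'.+1 by rewrite size_tuple.
pose x0 : I := tnth a (Ordinal (ltn0Sn (m' + k'.+1))).
have E : (m'.+1 + k'.+1).-1 = m' + k'.+1 by rewrite addSn.
rewrite /pw E takeD (drop_nth x0); last by rewrite Hsa; lia.
rewrite /= big_cat big_cons /=.
apply: leq_mul; last apply: leq_mul.
- have := le_M (n := m'.+1) (s := take m'.+1 a).
  rewrite /pw /= take_takel //; apply.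
  + by rewrite size_takel // Hsa; lia.
  + exact: take_sorted.
- exact: max_card.
- have := le_M (n := k'.+1) (s := drop m'.+1 a).
  rewrite /pw /=; apply.
  + by rewrite size_drop Hsa; lia.
  + exact: drop_sorted.
Qed.




Local Open Scope R_scope.

Lemma pathw n (a : n.-tuple I) : path_weight F cov G a = log2 (INR (pw n a)).
Proof.
rewrite /path_weight /pw; elim: (take n.-1 a) => [|A r IH].
  by rewrite !big_nil /= /log2 ln_1; unfold Rdiv; rewrite Rmult_0_l.
rewrite !big_cons IH log2_nat_mul ?D_pos //.
by apply: prodn_gt0 => i; apply: D_pos.
Qed.

Lemma wpath_eq n : wpath_seq F cov G n = log2 (INR (M n)) / INR n.
Proof.
rewrite /wpath_seq /M; congr Rdiv.
rewrite (big_morph (fun k => log2 (INR k)) (id1 := R0) (op1 := Rmax)).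
- by apply: eq_bigr => a _; rewrite pathw.
- move=> x y /=; case: (leqP x y) => Hxy.
  + by rewrite Rmax_right //; apply: log2_nat_le.
  + by rewrite Rmax_left //; apply: log2_nat_le; apply: ltnW.
- by rewrite /= /log2 ln0; unfold Rdiv; rewrite Rmult_0_l.
Qed.

End Comb.

Local Open Scope R_scope.

Theorem theorem3p1 (X U : Type) (F : X -> U -> X -> Prop) (Q : X -> Prop)
  (I : finType) (cov : I -> X -> Prop) (G : I -> U) :
  is_system F ->
  controlled_invariant F Q ->
  quasi_invariant_partition F Q cov G ->
  exists L : R,
    Un_cv (hinv_seq F Q cov G) L /\ Un_cv (wpath_seq F cov G) L.
Proof.
move=> Hsys _ Hqip.
pose c := log2 (INR #|I|).
pose d := fun n => (log2 (INR (M F cov G n)) + c).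
have Hc : (0 <= c) by apply: log2_nat_ge0.
have Hd : forall n, (0 <= d n).
  by move=> n; rewrite /d; generalize (log2_nat_ge0 (M F cov G n)); lra.
have Hsub : forall m k, (d (m + k)%coq_nat <= d m + d k).
  move=> m k; rewrite plusE.
  case: m => [|m]; first by rewrite add0n; generalize (Hd 0%N); lra.
  case: k => [|k]; first by rewrite addn0; generalize (Hd 0%N); lra.
  rewrite /d.
  have H1 := log2_nat_le (M_subadd F cov G (ltn0Sn m) (ltn0Sn k)).
  have H2 := log2_nat_mul_le (M F cov G m.+1) (#|I| * M F cov G k.+1).
  have H3 := log2_nat_mul_le #|I| (M F cov G k.+1).
  rewrite -/c in H3; lra.
have [L HL] := fekete d Hd Hsub.
exists L; split.
- apply: (cv_close Hc HL) => n Hn.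
  have Hn' : (0 < INR n) by apply: lt_0_INR; apply/ltP.
  have Hge := log2_nat_le (r_inv_ge Hsys Hqip Hn).
  have Hle := log2_nat_le (r_inv_le Hsys Hqip Hn).
  have Hm := log2_nat_mul_le (M F cov G n) #|I|.
  rewrite /hinv_seq /d; rewrite -/c in Hm.
  set r := log2 (INR (r_inv F Q cov G n)) in Hge Hle *.
  set a := log2 (INR (M F cov G n)) in Hge Hm *.
  have -> : (r / INR n - (a + c) / INR n = (r - a - c) / INR n) by field; lra.
  rewrite Rabs_left1.
  + have -> : (- ((r - a - c) / INR n) = (a + c - r) / INR n) by field; lra.
    unfold Rdiv; apply Rmult_le_compat_r; [left; apply Rinv_0_lt_compat; lra|lra].
  + have Hi : 0 < / INR n by apply Rinv_0_lt_compat.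
    unfold Rdiv; nra.
- apply: (cv_close Hc HL) => n Hn.
  have Hn' : (0 < INR n) by apply: lt_0_INR; apply/ltP.
  rewrite (wpath_eq Hsys Hqip) /d.
  have -> : (log2 (INR (M F cov G n)) / INR n - (log2 (INR (M F cov G n)) + c) / INR n
     = - (c / INR n)) by field; lra.
  rewrite Rabs_Ropp Rabs_right; first lra.
  apply Rle_ge; unfold Rdiv; apply Rmult_le_pos; [lra|left; apply Rinv_0_lt_compat; lra].
Qed.
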